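(* Let $X$ be a Banach space and let $x\in S_X$ be a super $\Delta$-point. Then every relatively weakly open subset $W$ of $B_X$ containing $x$ has Kuratowski measure of non-compactness $\alpha(W)=2$. More precisely, for every such $W$ and every $\varepsilon>0$ there is a sequence $(x_n)\subseteq W$ with $\|x_i-x_j\|>2-\varepsilon$ for all $i\neq j$.
   Context: The Kuratowski measure of non-compactness $\alpha(A)$ of a non-empty bounded subset $A$ of a metric space is the infimum of all $\varepsilon>0$ such that $A$ can be covered by finitely many sets of diameter at most $\varepsilon$. An element $x\in S_X$ is a super $\Delta$-point if $\sup_{y\in V}\|x-y\|=2$ for every relatively weakly open subset $V$ of $B_X$ containing $x$. *)

(* Defs.v *)
From HB Require Import structures.
From mathcomp Require Import all_boot all_order all_algebra.
From mathcomp Require Import all_classical all_reals all_analysis.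
Set Implicit Arguments. Unset Strict Implicit. Unset Printing Implicit Defensive.
Import Order.TTheory GRing.Theory Num.Theory.
Import numFieldNormedType.Exports.
Local Open Scope classical_set_scope.
Local Open Scope ring_scope.

Section Defs.
Context {R : realType} {V : normedModType R}.

Definition unit_ball : set V := [set y | Num.norm y <= 1].
Definition unit_sphere : set V := [set y | Num.norm y = 1].

Definition weakly_open (U : set V) : Prop :=
  forall x, U x -> exists (n : nat) (f : 'I_n -> {linear V -> R^o}) (d : R),
    (forall i, continuous (f i)) /\ 0 < d /\
    [set y | forall i, `|f i (y - x)| < d] `<=` U.

Definition rel_weakly_open_ball (W : set V) : Prop :=
  exists U, weakly_open U /\ W = U `&` unit_ball.

Definition super_Delta_point (x : V) : Prop :=
  unit_sphere x /\
  forall W, rel_weakly_open_ball W -> W x ->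
    sup [set `|x - y| | y in W] = 2.

Definition diam_le (S : set V) (e : R) : Prop :=
  forall y z, S y -> S z -> `|y - z| <= e.

Definition finitely_coverable (A : set V) (e : R) : Prop :=
  exists (n : nat) (S : 'I_n -> set V),
    (forall i, diam_le (S i) e) /\ A `<=` \bigcup_(i in [set: 'I_n]) S i.

Definition kuratowski (A : set V) : R :=
  inf [set e : R | 0 < e /\ finitely_coverable A e].

End Defs.

(* Main.v *)
Require Import Defs.
From HB Require Import structures.
From mathcomp Require Import all_boot all_order all_algebra.
From mathcomp Require Import all_classical all_reals all_analysis.
From mathcomp Require Import lra.
Import Order.TTheory GRing.Theory Num.Theory.
Import numFieldNormedType.Exports.
Local Open Scope classical_set_scope.
Local Open Scope ring_scope.

Section HB.
Variables (R : realType) (V : normedModType R).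

Definition PG (y0 : V) (G : set (V * R)) : Prop :=
  [/\ G (0, 0), (forall a b, G a -> G b -> G (a.1 + b.1, a.2 + b.2)),
      (forall (t : R) a, G a -> G (t *: a.1, t * a.2)),
      (forall a b, G a -> G b -> a.1 = b.1 -> a.2 = b.2) &
      (forall a, G a -> a.2 <= `|a.1|) /\ G (y0, `|y0|)].

Lemma PG_ext y0 G z : PG y0 G -> (forall r, ~ G (z, r)) ->
  exists B, PG y0 B /\ G `<` B.
Proof.
move=> [G0 GD GZ Gf [Gb Gy]] Gz.
pose E := [set a.2 - `|a.1 - z| | a in G].
have Eub b : G b -> ubound E (`|b.1 + z| - b.2).
  move=> Hb _ [a Ha <-].
  have := Gb _ (GD _ _ Ha Hb); rewrite /= => H.
  have : `|a.1 + b.1| <= `|a.1 - z| + `|b.1 + z|.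
    have -> : a.1 + b.1 = (a.1 - z) + (b.1 + z) by rewrite addrACA addNr addr0.
    exact: ler_normD.
  lra.
pose c := sup E.
have ci a : G a -> a.2 - `|a.1 - z| <= c.
  move=> Ha; apply: ub_le_sup; last by exists a.
  by exists (`|(0:V*R).1 + z| - (0:V*R).2); exact: (Eub (0,0) G0).
have cii b : G b -> c <= `|b.1 + z| - b.2.
  move=> Hb; apply: ge_sup; first by exists ((0:R*R).2 - `|(0:V*R).1 - z|); exists (0,0).
  exact: (Eub _ Hb).
pose B := [set p : V * R | exists a t, G a /\ p = (a.1 + t *: z, a.2 + t * c)].
exists B; split; last first.
  split.
    move=> p Hp; exists p, 0; split => //.
    by rewrite scale0r mul0r !addr0; case: p {Hp}.
  move=> BG; apply: (Gz c); apply: BG; exists (0, 0), 1; split => //.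
  by rewrite /= scale1r mul1r !add0r.
split.
- by exists (0,0), 0; split => //; rewrite scale0r mul0r !addr0.
- move=> _ _ [a [t [Ha ->]]] [b [s [Hb ->]]].
  exists (a.1 + b.1, a.2 + b.2), (t + s); split; first exact: GD.
  by rewrite /= scalerDl mulrDl; congr pair; rewrite addrACA.
- move=> u _ [a [t [Ha ->]]].
  exists (u *: a.1, u * a.2), (u * t); split; first exact: GZ.
  by rewrite /= scalerDr mulrDr scalerA mulrA.
- move=> _ _ [a [t [Ha ->]]] [b [s [Hb ->]]] /= E1.
  have [ts|ts] := eqVneq t s.
    subst s; have E2 : a.1 = b.1 by move/addIr: E1.
    by rewrite (Gf _ _ Ha Hb E2).
  exfalso.
  have Hts : t - s != 0 by rewrite subr_eq0.
  have Hm : G (-1 *: a.1, -1 * a.2) by exact: GZ.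
  have := GZ ((t - s)^-1) _ (GD _ _ Hb Hm) => /= H.
  apply: (Gz ((t - s)^-1 * (b.2 + -1 * a.2))).
  suff -> : z = (t - s)^-1 *: (b.1 + -1 *: a.1) by [].
  have : (t - s) *: z = b.1 - a.1.
    have -> : b.1 = a.1 + t *: z - s *: z by rewrite E1 addrK.
    by rewrite scalerBl addrAC [a.1 + _ - _]addrAC subrr add0r.
  by move=> Hz; rewrite scaleN1r -Hz scalerA mulVf // scale1r.
- split; last by exists (y0, `|y0|), 0; split => //; rewrite scale0r mul0r !addr0.
  move=> _ [a [t [Ha ->]]] /=.
  have [t0|t0|->] := ltgtP t 0; last first.
  + by rewrite scale0r mul0r !addr0; exact: Gb.
  +
    have Hb := GZ (t^-1) _ Ha.
    have := cii _ Hb => /= H.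
    have tn : t != 0 by rewrite gt_eqF.
    have Heq : a.1 + t *: z = t *: (t^-1 *: a.1 + z).
      by rewrite scalerDr scalerA mulfV // scale1r.
    rewrite Heq normrZ gtr0_norm //.
    have := ler_wpM2l (ltW t0) H.
    rewrite mulrBr mulrA mulfV // mul1r. lra.
  +
    set s := - t.
    have s0 : 0 < s by rewrite /s oppr_gt0.
    have sn : s != 0 by rewrite gt_eqF.
    have Hb := GZ (s^-1) _ Ha.
    have := ci _ Hb => /= H.
    have Heq : a.1 + t *: z = s *: (s^-1 *: a.1 - z).
      by rewrite scalerBr scalerA mulfV // scale1r /s scaleNr opprK.
    rewrite Heq normrZ gtr0_norm //.
    have := ler_wpM2l (ltW s0) H.
    rewrite mulrBr mulrA mulfV // mul1r.
    have -> : t = - s by rewrite /s opprK.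
    lra.
Qed.


Lemma hahn_banach (y0 : V) : exists f : {linear V -> R^o},
  continuous f /\ (forall v, `|f v| <= `|v|) /\ f y0 = `|y0|.
Proof.
pose P (G : set (V * R)) := G = set0 \/ PG y0 G.
have [A [PA Amax]] : exists A, P A /\ forall B, A `<` B -> ~ P B.
  apply: Zorn_bigcup => F FP Ftot.
  have [[G0 [FG0 [p0 Hp0]]]|Hn] := pselect (exists G, F G /\ G !=set0); last first.
    left; apply/seteqP; split => // p [G FG Gp]; apply: Hn; exists G; split => //.
    by exists p.
  right.
  have HP G p : F G -> G p -> PG y0 G.
    by move=> FG Gp; case: (FP _ FG) => // E; rewrite E in Gp.
  have common a b : (\bigcup_(X in F) X) a -> (\bigcup_(X in F) X) b ->
      exists G, [/\ F G, G a, G b & PG y0 G].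
    move=> [G1 F1 a1] [G2 F2 b2].
    case: (Ftot _ _ F1 F2) => [S12|S21].
      by exists G2; split => //; [exact: S12 | exact: (HP _ _ F2 b2)].
    by exists G1; split => //; [exact: S21 | exact: (HP _ _ F1 a1)].
  have [Z0 _ _ _ [_ Y0]] := HP _ _ FG0 Hp0.
  split.
  - by exists G0.
  - move=> a b Ua Ub; have [G [FG Ga Gb [_ GD _ _ _]]] := common _ _ Ua Ub.
    by exists G => //; exact: GD.
  - move=> t a [G FG Ga]; have [_ _ GZ _ _] := HP _ _ FG Ga.
    by exists G => //; exact: GZ.
  - move=> a b Ua Ub; have [G [FG Ga Gb [_ _ _ Gf _]]] := common _ _ Ua Ub.
    exact: Gf.
  - split; last by exists G0.
    move=> a [G FG Ga]; have [_ _ _ _ [Gb _]] := HP _ _ FG Ga; exact: Gb.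
have PGA : PG y0 A.
  case: PA => // A0; exfalso.
  pose B0 := [set p : V * R | exists t : R, p = (t *: y0, t * `|y0|)].
  apply: (Amax B0); last first.
    right; split.
    - by exists 0; rewrite scale0r mul0r.
    - move=> _ _ [t ->] [s ->]; exists (t + s).
      by rewrite /= scalerDl mulrDl.
    - move=> u _ [t ->]; exists (u * t); by rewrite /= scalerA mulrA.
    - move=> _ _ [t ->] [s ->] /= E.
      have [->|y0n] := eqVneq y0 0; first by rewrite normr0 !mulr0.
      have : (t - s) *: y0 = 0 by rewrite scalerBl E subrr.
      move/eqP; rewrite scaler_eq0 (negbTE y0n) orbF subr_eq0 => /eqP -> //.
    - split; last by exists 1; rewrite scale1r mul1r.
      move=> _ [t ->] /=; rewrite normrZ ler_wpM2r // ler_norm //.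
  rewrite A0; split => // H; have := H (y0, `|y0|).
  by move=> /(_ (ex_intro _ 1 _)); apply; rewrite scale1r mul1r.
have Afull z : exists r, A (z, r).
  apply: contrapT => Hn.
  have [B [PB AB]] := @PG_ext y0 A z PGA (fun r Ar => Hn (ex_intro _ r Ar)).
  by apply: (Amax B AB); right.
case: (choice Afull) => g Hg.
have [_ GD GZ Gf [Gb Gy]] := PGA.
have glin : linear g.
  move=> a u v.
  have := GD _ _ (GZ a _ (Hg u)) (Hg v) => /= H.
  exact: (Gf _ _ (Hg (a *: u + v)) H).
pose f : {linear V -> R^o} := HB.pack g (GRing.isLinear.Build _ _ _ _ g glin).
have fn v : `|g v| <= `|v|.
  rewrite ler_norml; apply/andP; split; last exact: (Gb _ (Hg v)).
  have := Gb _ (GZ (-1) _ (Hg v)); rewrite /= scaleN1r normrN mulN1r; lra.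
exists f; split; last split.
- apply/linear_bounded_continuous; apply/bounded_funP => r; exists r => u Hu.
  exact: le_trans (fn u) Hu.
- exact: fn.
- exact: (Gf _ _ (Hg y0) Gy).
Qed.

End HB.

Section Main.
Variables (R : realType) (V : normedModType R).

Lemma rwob_ball (W : set V) : rel_weakly_open_ball W -> W `<=` unit_ball.
Proof. by move=> [U [_ ->]] y []. Qed.

Lemma shrink (W : set V) (f : {linear V -> R^o}) (c : R) :
  continuous f -> rel_weakly_open_ball W ->
  rel_weakly_open_ball (W `&` [set z | c < f z]).
Proof.
move=> fc [U [UW ->]]; exists (U `&` [set z | c < f z]); split; last first.
  by rewrite setIAC.
move=> z [Uz cz]; have [n [g [d [gc [d0 gsub]]]]] := UW z Uz.
exists n.+1, (fun i => match unlift ord_max i with Some j => g j | None => f end),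
  (Num.min d (f z - c)).
split; first by move=> i; case: (unlift ord_max i).
split; first by rewrite lt_min d0 subr_gt0.
move=> y Hy; split.
  apply: gsub => j; have := Hy (lift ord_max j); rewrite liftK lt_min.
  by case/andP.
have := Hy ord_max; rewrite unlift_none lt_min => /andP[_].
rewrite linearB /= ltr_norml => /andP[H _]; lra.
Qed.

Fixpoint iterW (W : set V) (F : set V -> V * {linear V -> R^o}) (c : R) (k : nat)
  : set V :=
  match k with
  | 0 => W
  | k'.+1 => iterW W F c k' `&` [set z | c < (F (iterW W F c k')).2 z]
  end.

End Main.
Arguments rwob_ball {R V W}.
Arguments shrink {R V W f c}.
Arguments hahn_banach {R V}.
Arguments iterW {R V}.

Lemma seqP (R : realType) (V : normedModType R) (x : V) :
  super_Delta_point x ->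
  forall W : set V, rel_weakly_open_ball W -> W x ->
    (forall eps : R, 0 < eps ->
       exists u : nat -> V, (forall n, W (u n)) /\
         (forall i j : nat, i <> j -> 2 - eps < `|u i - u j|)).
Proof.
move=> [xs Hsup] W HW Wx eps eps0.
pose d := eps / 2.
have d0 : 0 < d by rewrite /d divr_gt0.
have epsd : eps = d + d by rewrite /d -splitr.
have step W' : rel_weakly_open_ball W' -> W' x ->
    exists p : V * {linear V -> R^o}, [/\ W' p.1, continuous p.2,
      (forall v, `|p.2 v| <= `|v|) & 2 - d < p.2 x - p.2 p.1].
  move=> HW' W'x.
  have hs : has_sup [set `|x - y| | y in W'].
    split; first by exists `|x - x|, x.
    exists 2 => _ [y Wy <-].
    apply: le_trans (ler_normB _ _) _.
    have := rwob_ball HW' _ Wy; rewrite /unit_ball /= => Hy.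
    move: xs; rewrite /unit_sphere /= => ->; lra.
  have [e [y Wy <-] He] := sup_adherent d0 hs.
  rewrite (Hsup W' HW' W'x) in He.
  have [f [fc [fn fy]]] := hahn_banach (x - y).
  exists (y, f); split => //=.
  by rewrite -linearB /= fy.
have stepc W' : exists p : V * {linear V -> R^o}, rel_weakly_open_ball W' -> W' x ->
    [/\ W' p.1, continuous p.2,
      (forall v, `|p.2 v| <= `|v|) & 2 - d < p.2 x - p.2 p.1].
  have [HW'|HW'] := pselect (rel_weakly_open_ball W' /\ W' x).
    by have [p Hp] := step W' HW'.1 HW'.2; exists p.
  have [p _] := step W HW Wx; exists p => H1 H2; exfalso; exact: HW'.
case: (choice stepc) => F HF.
pose Wn := iterW W F (1 - d).
have inv k : rel_weakly_open_ball (Wn k) /\ Wn k x.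
  elim: k => [|k [IH1 IH2]] //=.
  have [u1 gc gn gi] := HF _ IH1 IH2.
  split; first exact: shrink.
  split => //=.
  have := rwob_ball IH1 _ u1; rewrite /unit_ball /= => Hu.
  have := gn (F (Wn k)).1; rewrite ler_norml => /andP[H1 _]; lra.
have dec i k : Wn (i + k)%N `<=` Wn i.
  elim: k => [|k IH]; first by rewrite addn0.
  by rewrite addnS => y [/IH].
exists (fun k => (F (Wn k)).1); split.
  move=> k; have [IH1 IH2] := inv k; have [u1 _ _ _] := HF _ IH1 IH2.
  by have := dec 0%N k; rewrite add0n; apply.
have key i j : (i < j)%N -> 2 - eps < `|(F (Wn j)).1 - (F (Wn i)).1|.
  move=> ij.
  have [IHi1 IHi2] := inv i; have [ui _ gn gi] := HF _ IHi1 IHi2.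
  have [IHj1 IHj2] := inv j; have [uj _ _ _] := HF _ IHj1 IHj2.
  have : Wn i.+1 ((F (Wn j)).1).
    have := dec i.+1 (j - i.+1)%N; rewrite subnKC //; apply; exact: uj.
  move=> [_ /= Hj].
  set g := (F (Wn i)).2 in gn gi Hj *.
  have Hx : g x <= 1.
    have := gn x; move: xs; rewrite /unit_sphere /= => -> ; rewrite ler_norml.
    by case/andP.
  have := gn ((F (Wn j)).1 - (F (Wn i)).1); rewrite linearB /= ler_norml.
  case/andP => _ H; lra.
move=> i j; case: (ltngtP i j) => [ij|ji|->] // _.
  by rewrite distrC; exact: key.
exact: key.
Qed.

Arguments seqP {R V x}.

Theorem mainTheorem19 (R : realType) (X : completeNormedModType R) (x : X) :
  super_Delta_point x ->
  forall W : set X, rel_weakly_open_ball W -> W x ->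
    kuratowski W = 2 /\
    (forall eps : R, 0 < eps ->
       exists u : nat -> X, (forall n, W (u n)) /\
         (forall i j : nat, i <> j -> 2 - eps < `|u i - u j|)).
Proof.
move=> Hx W HW Wx.
have sq := seqP Hx W HW Wx.
split => //.
pose S := [set e : R | 0 < e /\ finitely_coverable W e].
have S2 : S 2.
  split => //; exists 1%N, (fun _ => W); split.
    move=> _ y z Wy Wz; apply: le_trans (ler_normB _ _) _.
    have := rwob_ball HW _ Wy; have := rwob_ball HW _ Wz.
    rewrite /unit_ball /= => H1 H2; lra.
  by move=> y Wy; exists ord0.
have lowb : lbound S 2.
  move=> e [e0 [n [Sf [Sd Scov]]]].
  rewrite leNgt; apply/negP => e2.
  have e20 : 0 < 2 - e by rewrite subr_gt0.
  have [u [Wu Hu]] := sq _ e20.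
  have hid (k : 'I_n.+1) : exists i : 'I_n, Sf i (u k).
    by have [i _ Hi] := Scov _ (Wu k); exists i.
  case: (choice hid) => idx Hidx.
  have inj : injective idx.
    move=> k l Heq.
    case: (eqVneq (val k) (val l)) => [/val_inj //|kl]; exfalso.
    have Hl := Hidx l; rewrite -Heq in Hl.
    have := Sd (idx k) _ _ (Hidx k) Hl.
    have := Hu k l (fun E => negP kl (introT eqP E)); lra.
  have := leq_card _ inj; rewrite !card_ord ltnn //.
have : inf S = 2.
  apply/eqP; rewrite eq_le; apply/andP; split.
    by apply: ge_inf => //; exists 2.
  by apply: lb_le_inf => //; exists 2.
by [].
Qed.
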